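(* Let $\mathcal A$ be a unital $C^*$-algebra, $p,q\in\mathcal A$ projections, $a\in\mathcal A$ invertible up to $(p,q)$, and $b$ a $(p,q)$-inverse of $a$. (a) For every $c\in\mathcal A$ with $\|c\|<\|b\|^{-1}$, the element $a+c$ is invertible up to $(p,q)$, and its $(p,q)$-inverse $b_1$ satisfies $\|b_1\|\le \dfrac{\|b\|}{1-\|b\|\,\|c\|}$. (b) Let $C=2\bigl(1+\sum_{n\ge1}|\alpha_n|2^{-(n-1)}\bigr)$, where $\alpha_n$ are the Taylor coefficients of $t\mapsto(1+t)^{-1/2}$ at $0$. If $p',q'\in\mathcal A$ are projections with $\|p-p'\|,\|q-q'\|<\min\{1/2,\,1/(4C\|a\|\,\|b\|)\}$, then $a$ is invertible up to $(p',q')$, and its $(p',q')$-inverse $b'$ satisfies $\|b'\|\le 2\|b\|$.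
   Context: For $a\in\mathcal A$ and projections $p,q$ in a unital $C^*$-algebra $\mathcal A$, $a$ is invertible up to $(p,q)$ if there is $b\in\mathcal A$ with $b=(1-p)b(1-q)$, $(1-q)a(1-p)b=1-q$ and $b(1-q)a(1-p)=1-p$; such $b$ is called a $(p,q)$-inverse of $a$ (it is unique). The constant $C$ is the one for which, for any projections $P,Q$ with $\|P-Q\|<1/2$, there is a unitary $U\in C^*(I,P,Q)$ with $U^*PU=Q$ and $\|I-U\|\le C\|P-Q\|$. *)

(* Defs.v *)
From HB Require Import structures.
From mathcomp Require Import all_boot all_order all_algebra.
From mathcomp Require Import all_classical all_reals all_analysis.
From mathcomp.real_closed Require Import complex.
Set Implicit Arguments. Unset Strict Implicit. Unset Printing Implicit Defensive.
Import Order.TTheory GRing.Theory Num.Theory.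
Local Open Scope ring_scope.

Record is_Cstar (R : realType) (A : algType R[i]) (nrm : A -> R) (st : A -> A)
  : Prop := IsCstar {
  cs_norm_ge0 : forall x, 0 <= nrm x;
  cs_norm_eq0 : forall x, nrm x = 0 -> x = 0;
  cs_norm_triangle : forall x y, nrm (x + y) <= nrm x + nrm y;
  cs_norm_scale : forall (l : R[i]) x, nrm (l *: x) = ComplexField.Normc.normc l * nrm x;
  cs_norm_submul : forall x y, nrm (x * y) <= nrm x * nrm y;
  cs_complete : forall u : nat -> A,
      (forall e : R, 0 < e -> exists N : nat, forall m n : nat,
          (N <= m)%N -> (N <= n)%N -> nrm (u m - u n) < e) ->
      exists l : A, forall e : R, 0 < e -> exists N : nat, forall n : nat,
          (N <= n)%N -> nrm (u n - l) < e;
  cs_star_add : forall x y, st (x + y) = st x + st y;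
  cs_star_scale : forall (l : R[i]) x, st (l *: x) = conjc l *: st x;
  cs_star_mul : forall x y, st (x * y) = st y * st x;
  cs_star_invol : forall x, st (st x) = x;
  cs_cstar_id : forall x, nrm (st x * x) = nrm x ^+ 2
}.

Definition is_proj (R : realType) (A : algType R[i]) (st : A -> A) (p : A) : Prop :=
  st p = p /\ p * p = p.

Definition pq_inverse (R : realType) (A : algType R[i]) (p q a b : A) : Prop :=
  [/\ b = (1 - p) * b * (1 - q),
      (1 - q) * a * (1 - p) * b = 1 - q &
      b * (1 - q) * a * (1 - p) = 1 - p].

Definition invertible_upto (R : realType) (A : algType R[i]) (p q a : A) : Prop :=
  exists b, pq_inverse p q a b.

(* alpha n : the n-th Taylor coefficient of t |-> (1+t)^(-1/2) at 0, i.e. the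
   generalized binomial coefficient binom(-1/2, n). *)
Definition alpha (R : realType) (n : nat) : R :=
  \prod_(k < n) ((- (1 / 2) - k%:R) / (k.+1)%:R).

Definition Cconst (R : realType) : R :=
  2 * (1 + limn (fun N : nat => \sum_(1 <= n < N) `|alpha R n| / 2 ^+ (n - 1))).

(* Main.v *)
Require Import Defs.
From HB Require Import structures.
From mathcomp Require Import all_boot all_order all_algebra.
From mathcomp Require Import all_classical all_reals all_analysis.
From mathcomp.real_closed Require Import complex.
From mathcomp Require Import ring lra.
Import Order.TTheory GRing.Theory Num.Theory.
Local Open Scope ring_scope.

Lemma geo_small (R : realType) (r e : R) : 0 <= r < 1 -> 0 < e ->
  exists N : nat, forall n, (N <= n)%N -> r ^+ n < e.
Proof.
move=> /andP[r0 r1] e0.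
have h : `|r| < 1 by rewrite ger0_norm.
move: (cvg_expr h) => /cvgrPdist_lt /(_ e e0).
move=> [N _ HN]; exists N => n Nn.
have := HN n Nn; rewrite sub0r normrN ger0_norm //; exact: exprn_ge0.
Qed.



Lemma nrm0 {R : realType} {A : algType R[i]} {nrm : A -> R} {st : A -> A}
  (HA : is_Cstar nrm st) : nrm 0 = 0.
Proof.
have := cs_norm_scale HA 0 0; rewrite scale0r => ->.
by rewrite (_ : ComplexField.Normc.normc 0 = 0) ?mul0r // ComplexField.Normc.normc0.
Qed.

Lemma nrmN {R : realType} {A : algType R[i]} {nrm : A -> R} {st : A -> A}
  (HA : is_Cstar nrm st) x : nrm (- x) = nrm x.
Proof.
rewrite -scaleN1r (cs_norm_scale HA).
have -> : ComplexField.Normc.normc (-1 : R[i]) = 1 by have := @normcN R 1; rewrite ComplexField.Normc.normc1.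
by rewrite mul1r.
Qed.

Lemma nrmB {R : realType} {A : algType R[i]} {nrm : A -> R} {st : A -> A}
  (HA : is_Cstar nrm st) x y : nrm (x - y) <= nrm x + nrm y.
Proof. by rewrite -(nrmN HA y); exact: (cs_norm_triangle HA). Qed.

Lemma nrmBC {R : realType} {A : algType R[i]} {nrm : A -> R} {st : A -> A}
  (HA : is_Cstar nrm st) x y : nrm (x - y) = nrm (y - x).
Proof. by rewrite -(nrmN HA) opprB. Qed.

Lemma nrm_eq0_small {R : realType} {A : algType R[i]} {nrm : A -> R} {st : A -> A}
  (HA : is_Cstar nrm st) x : (forall e : R, 0 < e -> nrm x <= e) -> x = 0.
Proof.
move=> H; apply: (cs_norm_eq0 HA).
have h0 := cs_norm_ge0 HA x.
case: (ltrP 0 (nrm x)) => h; last by apply/eqP; rewrite eq_le h h0.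
have := H (nrm x / 2); lra.
Qed.

Lemma star0 {R : realType} {A : algType R[i]} {nrm : A -> R} {st : A -> A}
  (HA : is_Cstar nrm st) : st 0 = 0.
Proof.
have := cs_star_add HA 0 0; rewrite addr0 => e.
by apply: (addrI (st 0)); rewrite addr0 -e.
Qed.

Lemma starN {R : realType} {A : algType R[i]} {nrm : A -> R} {st : A -> A}
  (HA : is_Cstar nrm st) x : st (- x) = - st x.
Proof.
have := cs_star_add HA x (- x); rewrite subrr (star0 HA) => e.
by apply/eqP; rewrite -addr_eq0 addrC -e.
Qed.

Lemma star1 {R : realType} {A : algType R[i]} {nrm : A -> R} {st : A -> A}
  (HA : is_Cstar nrm st) : st 1 = 1.
Proof.
have e := cs_star_mul HA (st 1) 1.
rewrite mulr1 (cs_star_invol HA) mulr1 in e; exact: esym e.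
Qed.

Lemma proj1 {R : realType} {A : algType R[i]} {nrm : A -> R} {st : A -> A}
  (HA : is_Cstar nrm st) : is_proj st (1 : A).
Proof. by split; [exact: (star1 HA)|rewrite mulr1]. Qed.

Lemma projC {R : realType} {A : algType R[i]} {nrm : A -> R} {st : A -> A}
  (HA : is_Cstar nrm st) p : is_proj st p -> is_proj st (1 - p).
Proof.
move=> [h1 h2]; split.
  by rewrite (cs_star_add HA) (starN HA) (star1 HA) h1.
by rewrite mulrBl mul1r mulrBr mulr1 h2 subrr subr0.
Qed.

Lemma proj_nrm {R : realType} {A : algType R[i]} {nrm : A -> R} {st : A -> A}
  (HA : is_Cstar nrm st) p : is_proj st p -> nrm p = 0 \/ nrm p = 1.
Proof.
move=> [h1 h2]; have := cs_cstar_id HA p; rewrite h1 h2 expr2 => e.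
have : nrm p * (nrm p - 1) = 0 by rewrite mulrBr mulr1 -e subrr.
move/eqP; rewrite mulf_eq0 subr_eq0 => /orP[] /eqP; by [left|right].
Qed.

Lemma proj_le1 {R : realType} {A : algType R[i]} {nrm : A -> R} {st : A -> A}
  (HA : is_Cstar nrm st) p : is_proj st p -> nrm p <= 1.
Proof. by move=> /(proj_nrm HA) [] ->. Qed.

Lemma nrm1 {R : realType} {A : algType R[i]} {nrm : A -> R} {st : A -> A}
  (HA : is_Cstar nrm st) : nrm (1 : A) <= 1.
Proof. exact: (proj_le1 HA _ (proj1 HA)). Qed.

Lemma nrm_exp {R : realType} {A : algType R[i]} {nrm : A -> R} {st : A -> A}
  (HA : is_Cstar nrm st) (y : A) n : nrm (y ^+ n) <= nrm y ^+ n.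
Proof.
elim: n => [|n IH]; first by rewrite !expr0 (nrm1 HA).
rewrite !exprS; apply: (le_trans (cs_norm_submul HA _ _)).
by apply: ler_wpM2l; [exact: (cs_norm_ge0 HA)|].
Qed.

Lemma le_small {R : realType} (a b : R) : (forall e, 0 < e -> a <= b + e) -> a <= b.
Proof.
move=> H; case: (lerP a b) => // h.
have := H ((a - b) / 2); lra.
Qed.

Fixpoint ns {R : realType} {A : algType R[i]} (y : A) (n : nat) : A :=
  if n is m.+1 then ns y m + y ^+ m else 0.

Lemma ns_l {R : realType} {A : algType R[i]} (y : A) n : (1 - y) * ns y n = 1 - y ^+ n.
Proof.
elim: n => [|n IH] /=; first by rewrite mulr0 expr0 subrr.
by rewrite mulrDr IH mulrBl mul1r -exprS addrA subrK.
Qed.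

Lemma ns_r {R : realType} {A : algType R[i]} (y : A) n : ns y n * (1 - y) = 1 - y ^+ n.
Proof.
elim: n => [|n IH] /=; first by rewrite mul0r expr0 subrr.
by rewrite mulrDl IH mulrBr mulr1 -exprSr addrA subrK.
Qed.

Lemma ns_bound {R : realType} {A : algType R[i]} {nrm : A -> R} {st : A -> A}
  (HA : is_Cstar nrm st) (y : A) n k : nrm y <= 1 ->
  (1 - nrm y) * nrm (ns y (n + k) - ns y n) <= nrm y ^+ n - nrm y ^+ (n + k).
Proof.
move=> r1; elim: k => [|k IH].
  by rewrite addn0 !subrr (nrm0 HA) mulr0.
rewrite addnS /= addrAC.
have h1 := cs_norm_triangle HA (ns y (n + k) - ns y n) (y ^+ (n + k)).
have h2 := nrm_exp HA y (n + k).
have h3 : 0 <= 1 - nrm y by lra.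
have h4 := ler_wpM2l h3 (le_trans h1 (lerD (lexx _) h2)).
rewrite exprS; set t := nrm y ^+ (n + k) in IH h4 *.
set u := nrm (ns y (n + k) - ns y n) in IH h4.
set v := nrm (ns y (n + k) - ns y n + y ^+ (n + k)) in h4 *.
have -> : nrm y ^+ n - nrm y * t = (nrm y ^+ n - t) + (1 - nrm y) * t.
  by rewrite mulrBl mul1r addrA subrK.
apply: (le_trans h4); rewrite mulrDr; exact: lerD.
Qed.

Lemma ns_cauchy {R : realType} {A : algType R[i]} {nrm : A -> R} {st : A -> A}
  (HA : is_Cstar nrm st) (y : A) : nrm y < 1 ->
  forall e : R, 0 < e -> exists N : nat, forall m n : nat,
    (N <= m)%N -> (N <= n)%N -> nrm (ns y m - ns y n) < e.
Proof.
move=> r1 e e0.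
have r0 := cs_norm_ge0 HA y.
have [N HN] : exists N : nat, forall n, (N <= n)%N -> nrm y ^+ n < e * (1 - nrm y).
  apply: geo_small; [by rewrite r0 r1| by rewrite mulr_gt0 // subr_gt0].
have key m n : (N <= n)%N -> (n <= m)%N -> nrm (ns y m - ns y n) < e.
  move=> Nn nm; have := ns_bound HA y n (m - n) (ltW r1).
  rewrite subnKC // => h.
  have := HN n Nn; have := exprn_ge0 m r0.
  set u := nrm (ns y m - ns y n) in h *; have u0 : 0 <= u by exact: (cs_norm_ge0 HA).
  move=> hm hn.
  have : (1 - nrm y) * u < (1 - nrm y) * e by lra.
  by rewrite ltr_pM2l // subr_gt0.
exists N => m n Nm Nn; case: (leqP n m) => nm.
  exact: key.
rewrite (nrmBC HA); apply: key => //; exact: ltnW.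
Qed.

Lemma neumann {R : realType} {A : algType R[i]} {nrm : A -> R} {st : A -> A}
  (HA : is_Cstar nrm st) (y : A) : nrm y < 1 ->
  exists z, (1 - y) * z = 1 /\ z * (1 - y) = 1 /\ nrm z <= 1 / (1 - nrm y).
Proof.
move=> r1.
have r0 := cs_norm_ge0 HA y.
have [l Hl] := cs_complete HA (ns_cauchy HA y r1).
have gN e : 0 < e -> exists N : nat, forall n, (N <= n)%N -> nrm y ^+ n < e.
  by move=> e0; apply: geo_small => //; rewrite r0 r1.
have K0 : 0 < nrm (1 - y) + 1 by have := cs_norm_ge0 HA (1 - y); lra.
set K := nrm (1 - y) + 1 in K0.
have approx (w : A) : (forall n, nrm (w - 1) <= nrm (1 - y) * nrm (l - ns y n) + nrm y ^+ n) -> w = 1.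
  move=> Hw; apply: subr0_eq; apply: (nrm_eq0_small HA) => e e0.
  have e2 : 0 < e / (2 * K) by rewrite divr_gt0 // mulr_gt0.
  have [N1 H1] := Hl _ e2.
  have [N2 H2] := gN (e / 2) (divr_gt0 e0 (ltr0Sn _ 1)).
  set n := maxn N1 N2.
  have h1 := H1 n (leq_maxl _ _); have h2 := H2 n (leq_maxr _ _).
  rewrite (nrmBC HA) in h1.
  have hd0 := cs_norm_ge0 HA (l - ns y n).
  have hK : nrm (1 - y) <= K by rewrite /K; lra.
  have hK0 := cs_norm_ge0 HA (1 - y).
  have hKd : K * (e / (2 * K)) = e / 2 by field; rewrite gt_eqF.
  have := Hw n.
  set d := nrm (l - ns y n) in h1 hd0 *.
  set t := e / (2 * K) in h1 hKd e2.
  have : nrm (1 - y) * d <= K * t.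
    by apply: ler_pM => //; exact: ltW.
  lra.
exists l; split; [|split].
- apply: approx => n.
  have -> : (1 - y) * l - 1 = (1 - y) * (l - ns y n) - y ^+ n.
    by rewrite mulrBr ns_l opprB addrA addrAC addrK.
  apply: (le_trans (nrmB HA _ _)); apply: lerD.
    exact: (cs_norm_submul HA).
  exact: (nrm_exp HA).
- apply: approx => n.
  have -> : l * (1 - y) - 1 = (l - ns y n) * (1 - y) - y ^+ n.
    by rewrite mulrBl ns_r opprB addrA addrAC addrK.
  apply: (le_trans (nrmB HA _ _)); apply: lerD.
    by rewrite mulrC; apply: (cs_norm_submul HA).
  exact: (nrm_exp HA).
- have r1' : 0 < 1 - nrm y by lra.
  apply: le_small => e e0.
  have [N HN] := Hl e e0.
  have h := HN N (leqnn N); rewrite (nrmBC HA) in h.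
  have hb := ns_bound HA y 0 N (ltW r1).
  rewrite add0n subr0 expr0 in hb.
  have hN := exprn_ge0 N r0.
  have hs : nrm (ns y N) <= 1 / (1 - nrm y).
    by rewrite ler_pdivlMr // mulrC; lra.
  have -> : l = ns y N + (l - ns y N) by rewrite addrC subrK.
  apply: (le_trans (cs_norm_triangle HA _ _)); apply: lerD => //; exact: ltW.
Qed.

Lemma alpha_le1 (R : realType) n : `|alpha R n| <= 1.
Proof.
rewrite /alpha; elim/big_ind: _ => //.
- by rewrite normr1.
- move=> x y hx hy; rewrite normrM.
  have := normr_ge0 x; have := normr_ge0 y; nra.
move=> i _.
rewrite normrM normfV (_ : - (1/2) - i%:R = - (1/2 + i%:R)); last by rewrite opprD.
rewrite normrN !ger0_norm ?ler0n //; last first.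
rewrite ler_pdivrMr ?ltr0Sn // mul1r.
have -> : i.+1%:R = i%:R + 1 :> R by rewrite -natr1.
have : (0:R) <= i%:R by [].
lra.
Qed.
Lemma alpha123 (R : realType) : alpha R 1 = -(1/2) /\ alpha R 2 = 3/8 /\ alpha R 3 = -(5/16).
Proof.
rewrite /alpha !big_ord_recr !big_ord0 /=.
by split; [|split]; field.
Qed.

Lemma Cconst_ge (R : realType) : 7/2 <= Cconst R.
Proof.
set u := (fun N : nat => \sum_(1 <= n < N) `|alpha R n| / 2 ^+ (n - 1)).
have f0 n : 0 <= `|alpha R n| / 2 ^+ (n - 1) :> R.
  by rewrite divr_ge0 // exprn_ge0.
have step N : u N.+1 = u N + (if (1 <= N)%N then `|alpha R N| / 2 ^+ (N - 1) else 0).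
  rewrite /u; case: N => [|N] /=.
    by rewrite !big_geq // addr0.
  by rewrite big_nat_recr.
have nd : nondecreasing_seq u.
  apply/nondecreasing_seqP => N; rewrite step lerDl; case: ifP => //.
have ub N : u N.+1 <= 2 - 2 / 2 ^+ N.
  elim: N => [|N IH]; first by rewrite /u big_geq // expr0; lra.
  rewrite step /= subn1 /=.
  have h1 : `|alpha R N.+1| / 2 ^+ N <= 1 / 2 ^+ N.
    by rewrite ler_pM2r ?alpha_le1 // invr_gt0 exprn_gt0.
  have h2 : 2 / 2 ^+ N.+1 = 1 / 2 ^+ N :> R.
    by rewrite exprS invfM mulrA divff ?mul1r ?div1r // pnatr_eq0.
  rewrite h2; have : 2 / 2 ^+ N = 2 * (1 / 2 ^+ N) :> R by rewrite mulrA mulr1.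
  move=> e; rewrite e in IH; lra.
have ub2 N : u N <= 2.
  case: N => [|N]; first by rewrite /u big_geq //; lra.
  apply: (le_trans (ub N)); rewrite lerBlDr lerDl divr_ge0 // exprn_ge0 //.
have cv : cvgn u.
  apply: nondecreasing_is_cvgn => //; exists 2 => _ [n _ <-]; exact: ub2.
have := nondecreasing_cvgn_le nd cv 4.
have -> : u 4 = 49/64.
  rewrite /u big_nat_recr //= big_nat_recr //= big_nat_recr //= big_geq //.
  have [a1 [a2 a3]] := alpha123 R.
  rewrite a1 a2 a3 !normrN !ger0_norm //.
  rewrite !subSS !subn0 expr0 expr1 expr2 add0r. by field.
rewrite /Cconst -/u; lra.
Qed.


Lemma neumannP {R : realType} {A : algType R[i]} {nrm : A -> R} {st : A -> A}
  (HA : is_Cstar nrm st) (x : A) : nrm x < 1 ->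
  exists z, (1 + x) * z = 1 /\ z * (1 + x) = 1 /\ nrm z <= 1 / (1 - nrm x).
Proof.
move=> h; have := neumann HA (- x); rewrite (nrmN HA) opprK; exact.
Qed.

Lemma parta {R : realType} {A : algType R[i]} {nrm : A -> R} {st : A -> A}
  (HA : is_Cstar nrm st) (P Q a b c : A) :
  P * P = P -> Q * Q = Q -> nrm P <= 1 -> nrm Q <= 1 ->
  b = P * b * Q -> Q * a * P * b = Q -> b * Q * a * P = P ->
  nrm b * nrm c < 1 ->
  exists b1, [/\ b1 = P * b1 * Q, Q * (a + c) * P * b1 = Q,
     b1 * Q * (a + c) * P = P & nrm b1 <= nrm b / (1 - nrm b * nrm c)].
Proof.
move=> PP QQ nP nQ hb h1 h2 hc.
have Pb : P * b = b by rewrite {1}hb !mulrA PP -hb.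
have bQ : b * Q = b by rewrite {1}hb -mulrA QQ -hb.
set c' := Q * c * P.
have nc' : nrm c' <= nrm c.
  have h0 := cs_norm_ge0 HA c.
  apply: (le_trans (cs_norm_submul HA _ _)).
  have := cs_norm_submul HA Q c; have := cs_norm_ge0 HA P; have := cs_norm_ge0 HA Q.
  have := cs_norm_ge0 HA (Q * c); nra.
have nb0 := cs_norm_ge0 HA b.
have nw : nrm (b * c') < 1.
  apply: (le_lt_trans (cs_norm_submul HA _ _)).
  have := cs_norm_ge0 HA c'; nra.
have nw' : nrm (c' * b) < 1.
  apply: (le_lt_trans (cs_norm_submul HA _ _)).
  have := cs_norm_ge0 HA c'; nra.
have [N [N1 [N2 nN]]] := neumannP HA _ nw.
have [N' [N'1 [N'2 _]]] := neumannP HA _ nw'.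
have comm : b * N' = N * b.
  have e : (1 + b * c') * b = b * (1 + c' * b) by rewrite mulrDl mulrDr mul1r mulr1 mulrA.
  by rewrite -[RHS]mulr1 -N'1 mulrA -[N * b * _]mulrA -e mulrA N2 mul1r.
have PN : P * N = N * P.
  have e : P * (1 + b * c') = (1 + b * c') * P.
    by rewrite mulrDr mulrDl mulr1 mul1r /c' !mulrA Pb -!mulrA PP.
  by rewrite -[LHS]mul1r -N2 -mulrA (mulrA (1 + b * c')) -e -(mulrA P) N1 mulr1.
have c'P : c' * P = c' by rewrite /c' -mulrA PP.
exists (N * b); split.
- by rewrite mulrA PN -(mulrA N P b) Pb -mulrA bQ.
- rewrite -comm.
  have -> : Q * (a + c) * P * (b * N') = Q * (1 + c' * b) * N'.
    transitivity (Q * N' + Q * c * P * b * N').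
      by rewrite mulrDr !mulrDl !mulrA h1.
    by rewrite /c' mulrDr mulr1 !mulrDl !mulrA QQ.
  by rewrite -mulrA N'1 mulr1.
- have e3 : b * (Q * ((a + c) * P)) = (1 + b * c') * P.
    transitivity (P + b * Q * c * P).
      by rewrite mulrDl !mulrDr !mulrA h2.
    by rewrite mulrDl mul1r -(mulrA b c' P) c'P /c' !mulrA.
  by rewrite -!mulrA e3 mulrA N2 mul1r.
- set k := nrm b * nrm c.
  have hw : nrm (b * c') <= k.
    apply: (le_trans (cs_norm_submul HA _ _)); exact: ler_wpM2l.
  have hk : 0 < 1 - k by rewrite /k; lra.
  have hw' : 0 < 1 - nrm (b * c') by lra.
  have nN2 : nrm N <= 1 / (1 - k).
    apply: (le_trans nN); rewrite !div1r lef_pV2 ?posrE //; lra.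
  apply: (le_trans (cs_norm_submul HA _ _)).
  rewrite [X in _ <= X]mulrC; apply: ler_wpM2r => //.
  by rewrite -div1r.
Qed.


Lemma pq_unique {R : realType} {A : algType R[i]} (P Q a b1 b2 : A) :
  P * P = P -> Q * Q = Q -> b1 = P * b1 * Q -> b1 * Q * a * P = P ->
  Q * a * P * b2 = Q -> b2 = P * b2 * Q -> b1 = b2.
Proof.
move=> PP QQ h1 h2 h3 h4.
have b1Q : b1 * Q = b1 by rewrite {1}h1 -mulrA QQ -h1.
have Pb2 : P * b2 = b2 by rewrite {1}h4 !mulrA PP -h4.
by rewrite -b1Q -h3 !mulrA h2 Pb2.
Qed.

Lemma simil {R : realType} {A : algType R[i]} {nrm : A -> R} {st : A -> A}
  (HA : is_Cstar nrm st) (p p' : A) : is_proj st p -> is_proj st p' ->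
  2 * nrm (p - p') < 1 ->
  exists Z W : A, [/\ Z * (1 - p') = (1 - p) * Z, Z * W = 1, W * Z = 1,
     nrm (Z - 1) <= 2 * nrm (p - p') & nrm W <= 1 / (1 - nrm (Z - 1))].
Proof.
move=> hp hp' hd.
have [_ pp] := hp; have [_ pp'] := hp'.
have [_ PP] := projC HA _ hp; have [_ PP'] := projC HA _ hp'.
have e1 : p' * (1 - p') = 0 by rewrite mulrBr mulr1 pp' subrr.
have e2 : (1 - p) * p = 0 by rewrite mulrBl mul1r pp subrr.
set Z := (1 - p) * (1 - p') + p * p'.
have hZ : Z * (1 - p') = (1 - p) * Z.
  transitivity ((1 - p) * (1 - p')).
    by rewrite /Z mulrDl -!mulrA PP' e1 mulr0 addr0.
  by symmetry; rewrite /Z mulrDr !mulrA PP e2 mul0r addr0.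
have eZ : Z - 1 = (1 - p) * ((1 - p') - (1 - p)) + p * (p' - p).
  rewrite (mulrBr (1 - p) (1 - p') (1 - p)) (mulrBr p p' p) PP pp addrACA -opprD subrK.
  by [].
have hd1 : (1 - p') - (1 - p) = p - p' by rewrite opprB addrC addrA subrK.
have nZ : nrm (Z - 1) <= 2 * nrm (p - p').
  rewrite eZ hd1; apply: (le_trans (cs_norm_triangle HA _ _)).
  have h1 := cs_norm_submul HA (1 - p) (p - p').
  have h2 := cs_norm_submul HA p (p' - p).
  rewrite (nrmBC HA p') in h2.
  have := proj_le1 HA _ (projC HA _ hp); have := proj_le1 HA _ hp.
  have := cs_norm_ge0 HA (p - p'); nra.
have nZ1 : nrm (Z - 1) < 1 by lra.
have [W [W1 [W2 W3]]] := neumannP HA _ nZ1.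
rewrite addrC subrK in W1 W2.
by exists Z, W; split.
Qed.


Theorem mainTheorem8 (R : realType) (A : algType R[i]) (nrm : A -> R) (st : A -> A)
  (HA : is_Cstar nrm st) (p q a b : A)
  (Hp : is_proj st p) (Hq : is_proj st q) (Hab : pq_inverse p q a b) :
  (* (a) *)
  (forall c : A, nrm b * nrm c < 1 ->
     invertible_upto p q (a + c) /\
     (forall b1 : A, pq_inverse p q (a + c) b1 ->
        nrm b1 <= nrm b / (1 - nrm b * nrm c)))
  /\
  (* (b) *)
  (forall p' q' : A, is_proj st p' -> is_proj st q' ->
     nrm (p - p') < 1 / 2 -> 4 * Cconst R * nrm a * nrm b * nrm (p - p') < 1 ->
     nrm (q - q') < 1 / 2 -> 4 * Cconst R * nrm a * nrm b * nrm (q - q') < 1 ->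
     invertible_upto p' q' a /\
     (forall b' : A, pq_inverse p' q' a b' -> nrm b' <= 2 * nrm b)).
Proof.
have hP := projC HA _ Hp; have hQ := projC HA _ Hq.
have [_ PP] := hP; have [_ QQ] := hQ.
have nP := proj_le1 HA _ hP; have nQ := proj_le1 HA _ hQ.
case: Hab => hb h1 h2.
split.
  move=> c hc.
  have [b1 [e1 e2 e3 e4]] := parta HA _ _ _ _ c PP QQ nP nQ hb h1 h2 hc.
  split; first by exists b1; split.
  move=> b2 [f1 f2 f3].
  by rewrite -(pq_unique _ _ _ _ _ PP QQ e1 e3 f2 f1).
move=> p' q' hp' hq' d1h Cd1 d2h Cd2.
have hP' := projC HA _ hp'; have hQ' := projC HA _ hq'.
have [_ PP'] := hP'; have [_ QQ'] := hQ'.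
have dd (x y : A) : (1 - y) - (1 - x) = x - y by rewrite opprB addrC addrA subrK.
case: (eqVneq b 0) => [b0|bn0].
  have P0 : 1 - p = 0 by rewrite -h2 b0 !mul0r.
  have Q0 : 1 - q = 0 by rewrite -h1 b0 mulr0.
  have P'0 : 1 - p' = 0.
    move: d1h; rewrite -(dd p p') P0 subr0 => hh.
    case: (proj_nrm HA _ hP') => hh2; first exact: (cs_norm_eq0 HA).
    by exfalso; move: hh; rewrite hh2; lra.
  have Q'0 : 1 - q' = 0.
    move: d2h; rewrite -(dd q q') Q0 subr0 => hh.
    case: (proj_nrm HA _ hQ') => hh2; first exact: (cs_norm_eq0 HA).
    by exfalso; move: hh; rewrite hh2; lra.
  split.
    by exists 0; rewrite /pq_inverse P'0 Q'0 ?mulr0 ?mul0r.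
  move=> b' [-> _ _]; rewrite P'0 !mul0r (nrm0 HA).
  by rewrite mulr_ge0 // (cs_norm_ge0 HA).
set P := 1 - p in PP nP hb h1 h2 hP; set Q := 1 - q in QQ nQ hb h1 h2 hQ.
set P' := 1 - p' in PP' hP'; set Q' := 1 - q' in QQ' hQ'.
set d1 := nrm (p - p') in d1h Cd1; set d2 := nrm (q - q') in d2h Cd2.
have na0 := cs_norm_ge0 HA a; have nb0 := cs_norm_ge0 HA b.
have d10 : 0 <= d1 by exact: (cs_norm_ge0 HA).
have d20 : 0 <= d2 by exact: (cs_norm_ge0 HA).
have eta1 : 1 <= nrm a * nrm b.
  have Pn0 : P != 0.
    apply/eqP => P0; move/eqP: bn0; apply; rewrite hb P0 !mul0r //.
  have nP1 : nrm P = 1.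
    case: (proj_nrm HA _ hP) => // /(cs_norm_eq0 HA) P0; by rewrite P0 eqxx in Pn0.
  have : nrm P <= nrm b * nrm Q * nrm a * nrm P.
    rewrite -{1}h2; apply: (le_trans (cs_norm_submul HA _ _)).
    apply: ler_wpM2r; first exact: (cs_norm_ge0 HA).
    apply: (le_trans (cs_norm_submul HA _ _)).
    apply: ler_wpM2r => //.
    exact: (cs_norm_submul HA).
  rewrite nP1 mulr1 => h.
  have := cs_norm_ge0 HA Q; have := mulr_ge0 na0 nb0; nra.
have CC := Cconst_ge R.
have t1 : nrm a * nrm b * d1 < 1 / 14.
  have e : 4 * Cconst R * nrm a * nrm b * d1 = 4 * Cconst R * (nrm a * nrm b * d1) by rewrite !mulrA.
  rewrite e in Cd1; have := mulr_ge0 (mulr_ge0 na0 nb0) d10; nra.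
have t2 : nrm a * nrm b * d2 < 1 / 14.
  have e : 4 * Cconst R * nrm a * nrm b * d2 = 4 * Cconst R * (nrm a * nrm b * d2) by rewrite !mulrA.
  rewrite e in Cd2; have := mulr_ge0 (mulr_ge0 na0 nb0) d20; nra.
have d1s : d1 < 1 / 14 by nra.
have d2s : d2 < 1 / 14 by nra.
have [Zp [Wp [ZpP ZWp WZp nZp nWp]]] := simil HA p p' Hp hp' (ltac:(rewrite -/d1; lra)).
have [Zq [Wq [ZqQ ZWq WZq nZq nWq]]] := simil HA q q' Hq hq' (ltac:(rewrite -/d2; lra)).
rewrite -/d1 -/P -/P' in ZpP nZp; rewrite -/d2 -/Q -/Q' in ZqQ nZq.
set x1 := nrm (Zp - 1) in nZp nWp; set x2 := nrm (Zq - 1) in nZq nWq.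
have x10 : 0 <= x1 by exact: (cs_norm_ge0 HA).
have x20 : 0 <= x2 by exact: (cs_norm_ge0 HA).
have hQ'e : Q' = Wq * Q * Zq by rewrite -[Q']mul1r -WZq -(mulrA Wq Zq Q') ZqQ mulrA.
have hP'e : P' = Wp * P * Zp by rewrite -[P']mul1r -WZp -(mulrA Wp Zp P') ZpP mulrA.
have P'Wp X : X * P' * Wp = X * Wp * P.
  by rewrite hP'e !mulrA -mulrA ZWp mulr1.
have P'Wp0 : P' * Wp = Wp * P by have := P'Wp 1; rewrite !mul1r.
have ZqQ' X : X * Zq * Q' = X * Q * Zq by rewrite -mulrA ZqQ mulrA.
set wp := nrm Wp in nWp.
have wp0 : 0 <= wp by exact: (cs_norm_ge0 HA).
have wp1 : wp * (1 - x1) <= 1.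
  by move: nWp; rewrite ler_pdivlMr ?mul1r //; lra.
set eta := nrm a * nrm b in eta1 t1 t2.
have y1 : eta * x1 < 1 / 7 by nra.
have y2 : eta * x2 < 1 / 7 by nra.
have x1s : x1 < 1 / 7 by nra.
have x2s : x2 < 1 / 7 by nra.
have ec : Zq * a * Wp - a = (Zq - 1) * a * Wp - a * ((Zp - 1) * Wp).
  rewrite (mulrBl Wp Zp 1) ZWp mul1r mulrBr mulr1 (mulrBl a Zq 1) mul1r mulrBl.
  by rewrite opprB addrA subrK.
set c := Zq * a * Wp - a in ec.
have nc : nrm c <= x2 * nrm a * wp + nrm a * (x1 * wp).
  rewrite ec; apply: (le_trans (nrmB HA _ _)); apply: lerD.
    apply: (le_trans (cs_norm_submul HA _ _)); apply: ler_wpM2r => //.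
    exact: (cs_norm_submul HA).
  apply: (le_trans (cs_norm_submul HA _ _)); apply: ler_wpM2l => //.
  exact: (cs_norm_submul HA).
have ns : nrm b * nrm c <= (eta * x1 + eta * x2) * wp.
  have e : nrm b * (x2 * nrm a * wp + nrm a * (x1 * wp)) = (eta * x1 + eta * x2) * wp.
    by rewrite /eta; ring.
  rewrite -e; exact: ler_wpM2l.
have wp76 : wp <= 7 / 6 by nra.
have hs : nrm b * nrm c < 1 by nra.
have [b1 [e1 e2 e3 e4]] := parta HA _ _ _ _ c PP QQ nP nQ hb h1 h2 hs.
have ac : a + c = Zq * a * Wp by rewrite /c addrC subrK.
rewrite ac in e2 e3.
have e2X X : X * Q * Zq * a * Wp * P * b1 = X * Q by rewrite -{2}e2 !mulrA.
have e3X X : X * b1 * Q * Zq * a * Wp * P = X * P by rewrite -{2}e3 !mulrA.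
set b' := Wp * b1 * Zq.
have f1 : b' = P' * b' * Q'.
  by rewrite /b' {1}e1 !mulrA P'Wp0 ZqQ'.
have f2 : Q' * a * P' * b' = Q'.
  by rewrite /b' !mulrA P'Wp {1}hQ'e e2X -hQ'e.
have f3 : b' * Q' * a * P' = P'.
  by rewrite /b' ZqQ' {1}hP'e !mulrA e3X -hP'e.
split; first by exists b'; split.
move=> b2 [g1 g2 g3].
rewrite -(pq_unique _ _ _ _ _ PP' QQ' f1 f3 g2 g1).
have zq : nrm Zq <= 1 + x2.
  have -> : Zq = 1 + (Zq - 1) by rewrite addrC subrK.
  apply: (le_trans (cs_norm_triangle HA _ _)); apply: lerD => //; exact: (nrm1 HA).
have zq0 := cs_norm_ge0 HA Zq.
set s := nrm b * nrm c in ns hs e4.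
have nb1 : nrm b1 * (1 - s) <= nrm b.
  by move: e4; rewrite ler_pdivlMr //; lra.
have nb10 := cs_norm_ge0 HA b1.
have key : wp * nrm Zq <= 2 * (1 - s).
  have h3 : wp * nrm Zq <= wp * (1 + x2) by exact: ler_wpM2l.
  nra.
apply: (le_trans (cs_norm_submul HA _ _)).
have := cs_norm_submul HA Wp b1; rewrite -/wp => h4.
have h5 : nrm (Wp * b1) * nrm Zq <= wp * nrm b1 * nrm Zq by exact: ler_wpM2r.
apply: (le_trans h5).
have -> : wp * nrm b1 * nrm Zq = nrm b1 * (wp * nrm Zq) by ring.
have h6 : nrm b1 * (wp * nrm Zq) <= nrm b1 * (2 * (1 - s)) by exact: ler_wpM2l.
apply: (le_trans h6); lra.
Qed.
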